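(* Let $w\in\mathbb{R}^n$ with $w\ge0$, $W=ww^\top$, and integers $p,q\in\{1,\dots,n\}$, $r=pq$. Then the optimal value of the linear program $$\max\ \sum_{i=1}^n\sum_{j=1}^n W_{ij}t_{ij}\ \text{ s.t. }\ \sum_{j=1}^n t_{ij}\le q\ (\forall i),\ \sum_{i=1}^n t_{ij}\le p\ (\forall j),\ \sum_{i,j}t_{ij}\le r,\ 0\le t_{ij}\le1\ (\forall i,j)$$ equals $\sum_{i=1}^p\sum_{j=1}^q w_{[i]}w_{[j]}$.
   Context: $w_{[i]}$ denotes the $i$-th largest entry of $w$. *)

(* Defs.v *)
From HB Require Import structures.
From mathcomp Require Import all_boot all_order all_algebra.
Set Implicit Arguments. Unset Strict Implicit. Unset Printing Implicit Defensive.
Import Order.TTheory GRing.Theory Num.Theory.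
Local Open Scope ring_scope.

(* Entries of w sorted in nonincreasing order; wdesc w k = w_{[k+1]} (0-indexed). *)
Definition wdesc (R : realFieldType) (n : nat) (w : 'cV[R]_n) (k : nat) : R :=
  nth 0 (sort (fun x y : R => y <= x) [seq w i 0 | i <- enum 'I_n]) k.

Definition lp_feasible (R : realFieldType) (n p q : nat) (t : 'M[R]_n) : Prop :=
  [/\ forall i : 'I_n, \sum_(j < n) t i j <= q%:R,
      forall j : 'I_n, \sum_(i < n) t i j <= p%:R,
      \sum_(i < n) \sum_(j < n) t i j <= (p * q)%N%:R &
      forall i j : 'I_n, 0 <= t i j <= 1].

Definition lp_objective (R : realFieldType) (n : nat) (W t : 'M[R]_n) : R :=
  \sum_(i < n) \sum_(j < n) W i j * t i j.

(* Main.v *)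
Require Import Defs.
From HB Require Import structures.
From mathcomp Require Import all_boot all_order all_algebra all_fingroup.
From mathcomp Require Import ring lra.
Import Order.TTheory GRing.Theory Num.Theory.
Local Open Scope ring_scope.

Lemma sum_ind (R : realFieldType) n m (f : nat -> R) : (m <= n)%N ->
  \sum_(l < n) f l * (if (l < m)%N then 1 else 0) = \sum_(l < m) f l.
Proof.
move=> hmn.
rewrite (eq_bigr (fun l : 'I_n => if (l < m)%N then f l else 0)); last first.
  by move=> l _; case: ifP; rewrite ?mulr1 ?mulr0.
by rewrite -big_mkcond (big_ord_narrow hmn).
Qed.
Lemma tp (R : realFieldType) n (w : 'cV[R]_n) :
  perm_eq (sort (fun x y : R => y <= x) [seq w i 0 | i <- enum 'I_n]) [tuple w i 0 | i < n].
Proof. by rewrite perm_sort /= enumT unlock. Qed.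

Section S.
Variables (R : realFieldType) (n : nat) (w : 'cV[R]_n).
Hypothesis hw : forall i : 'I_n, 0 <= w i 0.

Let s := sort (fun x y : R => y <= x) [seq w i 0 | i <- enum 'I_n].

Lemma s_perm : perm_eq s [seq w i 0 | i <- enum 'I_n].
Proof. by rewrite perm_sort. Qed.

Lemma s_size : size s = n.
Proof. by rewrite size_sort size_map size_enum_ord. Qed.

Lemma s_sorted : sorted (fun x y : R => y <= x) s.
Proof. apply: sort_sorted => x y; exact: le_total. Qed.

Lemma wdesc_mono (i j : nat) : (i <= j)%N -> (j < n)%N -> wdesc w j <= wdesc w i.
Proof.
move=> hij hj; rewrite /wdesc -/s.
apply: (sorted_leq_nth (leT := fun x y : R => y <= x)) => //.
- by move=> x y z /= h1 h2; exact: le_trans h2 h1.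
- exact: s_sorted.
- by rewrite inE s_size; apply: leq_ltn_trans hij hj.
- by rewrite inE s_size.
Qed.

Lemma wdesc_ge0 (j : nat) : 0 <= wdesc w j.
Proof.
rewrite /wdesc -/s; case: (ltnP j (size s)) => hj; last by rewrite nth_default.
have := mem_nth 0 hj; rewrite (perm_mem s_perm) => /mapP [i _ ->]; exact: hw.
Qed.

Lemma sum_perm (f : R -> R) : \sum_(i < n) f (w i 0) = \sum_(0 <= j < n) f (wdesc w j).
Proof.
have -> : \sum_(i < n) f (w i 0) = \sum_(i <- enum 'I_n) f (w i 0).
  by rewrite big_enum.
rewrite -(big_map (fun i : 'I_n => w i 0) xpredT f) /=.
rewrite -(perm_big _ s_perm) (big_nth 0) s_size.
by [].
Qed.

Lemma keyL (k : nat) (c : R) (x : 'I_n -> R) : (k <= n)%N -> 0 <= c ->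
  (forall i, 0 <= x i <= c) -> \sum_i x i <= k%:R * c ->
  \sum_i w i 0 * x i <= c * \sum_(j < k) wdesc w j.
Proof.
move=> hk hc hx hs.
case: k hk hs => [|k] hk hs.
  have hs0 : \sum_i x i = 0.
    apply/eqP; rewrite eq_le; rewrite mul0r in hs; rewrite hs /=.
    by apply: sumr_ge0 => i _; case/andP: (hx i).
  rewrite big_ord0 mulr0; apply: sumr_le0 => i _.
  by rewrite (psumr_eq0P (fun i _ => proj1 (andP (hx i))) hs0) // mulr0.
set m := wdesc w k.
have hm : 0 <= m by apply: wdesc_ge0.
have step1 : \sum_i w i 0 * x i <= \sum_i (c * Num.max (w i 0 - m) 0 + m * x i).
  apply: ler_sum => i _; case/andP: (hx i) => h0 h1.
  case: (lerP 0 (w i 0 - m)) => h.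
    nra.
  nra.
apply: (le_trans step1); rewrite big_split /= -mulr_sumr -mulr_sumr.
rewrite (sum_perm (fun y => Num.max (y - m) 0)).
rewrite (big_cat_nat (leq0n k.+1) hk) /=.
rewrite [X in c * (_ + X) + _ <= _](_ : _ = 0); last first.
  rewrite big_nat_cond; apply: big1 => j /andP [/andP [hj1 hj2] _].
  apply/max_idPr; rewrite subr_le0 /m; apply: wdesc_mono => //; exact: ltnW.
rewrite addr0.
rewrite [X in c * X + _ <= _](_ : _ = \sum_(0 <= j < k.+1) (wdesc w j - m)); last first.
  rewrite big_nat_cond [RHS]big_nat_cond; apply: eq_bigr => j /andP [/andP [_ hj] _].
  apply/max_idPl; rewrite subr_ge0 /m; apply: wdesc_mono => //.
rewrite big_split /= sumr_const_nat subn0 big_mkord.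
have : m * \sum_i x i <= m * (k.+1%:R * c) by apply: ler_wpM2l.
rewrite -mulr_natr. 
set A := \sum_(j < k.+1) wdesc w j.
move=> h.
have -> : (- m) *+ k.+1 = - (m * k.+1%:R) by rewrite mulNrn mulr_natr.
nra.
Qed.
End S.

Theorem mainTheorem18 (R : realFieldType) (n : nat) (w : 'cV[R]_n)
    (hw : forall i : 'I_n, 0 <= w i 0) (p q : nat)
    (hp : (1 <= p <= n)%N) (hq : (1 <= q <= n)%N) :
  let W := w *m w^T in
  let S := \sum_(i < p) \sum_(j < q) wdesc w i * wdesc w j in
  (forall t : 'M[R]_n, lp_feasible p q t -> lp_objective W t <= S) /\
  (exists2 t : 'M[R]_n, lp_feasible p q t & lp_objective W t = S).
Proof.
move=> W S.
case/andP: hp => hp1 hpn; case/andP: hq => hq1 hqn.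
have hS : S = (\sum_(i < p) wdesc w i) * (\sum_(j < q) wdesc w j).
  by rewrite /S mulr_suml; apply: eq_bigr => i _; rewrite mulr_sumr.
have hobj : forall t : 'M[R]_n, lp_objective W t =
    \sum_i w i 0 * (\sum_j w j 0 * t i j).
  move=> t; rewrite /lp_objective; apply: eq_bigr => i _; rewrite mulr_sumr.
  apply: eq_bigr => j _; rewrite /W !mxE big_ord1 !mxE; ring.
have hA0 : forall k, 0 <= \sum_(j < k) wdesc w j.
  by move=> k; apply: sumr_ge0 => j _; apply: wdesc_ge0.
split.
  move=> t [hr hc htot hb].
  have hsi : forall i, 0 <= \sum_j w j 0 * t i j <= \sum_(j < q) wdesc w j.
    move=> i; apply/andP; split.
      apply: sumr_ge0 => j _; apply: mulr_ge0 => //; by case/andP: (hb i j).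
    rewrite -[X in _ <= X]mul1r.
    apply: (@keyL R n w hw q 1 (fun j => t i j) hqn ler01) => [j|]; first exact: hb.
    by rewrite mulr1.
  have hsum : \sum_i \sum_j w j 0 * t i j <= p%:R * \sum_(j < q) wdesc w j.
    rewrite exchange_big /=.
    rewrite (eq_bigr (fun j => w j 0 * \sum_i t i j)); last first.
      by move=> j _; rewrite mulr_sumr.
    apply: (@keyL R n w hw q p%:R (fun j => \sum_i t i j) hqn (ler0n _ p)) => [j|].
      apply/andP; split; last exact: hc.
      by apply: sumr_ge0 => i _; case/andP: (hb i j).
    by rewrite exchange_big /= -natrM mulnC.
  rewrite hobj hS mulrC.
  apply: (@keyL R n w hw p _ (fun i => \sum_j w j 0 * t i j) hpn (hA0 q)) => [i|]; first exact: hsi.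
  exact: hsum.
have /tuple_permP [sg hsg] := @tp R n w.
have hd : forall l : 'I_n, wdesc w l = w (sg l) 0.
  move=> l; rewrite /wdesc hsg.
  by rewrite -(tnth_nth 0 [tuple tnth [tuple w i 0 | i < n] (sg i) | i < n] l) !tnth_mktuple.
pose ind (b : bool) : R := if b then 1 else 0.
have ind01 : forall b, 0 <= ind b <= 1.
  by move=> b; rewrite /ind; case: b; rewrite ?lexx ?ler01.
have hsumi : forall m (f : nat -> R), (m <= n)%N ->
    \sum_(i < n) f ((sg^-1)%g i) * ind ((sg^-1)%g i < m)%N = \sum_(l < m) f l.
  move=> m f hm; rewrite (reindex_inj (@perm_inj _ sg)) /=.
  rewrite -(@sum_ind R n m f hm); apply: eq_bigr => l _; by rewrite permK.
pose t : 'M[R]_n := \matrix_(i, j) (ind ((sg^-1)%g i < p)%N * ind ((sg^-1)%g j < q)%N).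
have hrow : forall i, \sum_j t i j = ind ((sg^-1)%g i < p)%N * q%:R.
  move=> i; have := hsumi q (fun _ => 1) hqn; rewrite sumr_const card_ord => <-.
  rewrite mulr_sumr; apply: eq_bigr => j _.
  by rewrite mxE mul1r.
have hcol : forall j, \sum_i t i j = p%:R * ind ((sg^-1)%g j < q)%N.
  move=> j; have := hsumi p (fun _ => 1) hpn; rewrite sumr_const card_ord => <-.
  rewrite mulr_suml; apply: eq_bigr => i _.
  by rewrite mxE mul1r.
exists t.
  split.
  - move=> i; rewrite hrow; have := ind01 ((sg^-1)%g i < p)%N; have := ler0n R q; nra.
  - move=> j; rewrite hcol; have := ind01 ((sg^-1)%g j < q)%N; have := ler0n R p; nra.
  - under eq_bigr do rewrite hrow.
    rewrite -mulr_suml natrM.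
    have := hsumi p (fun _ => 1) hpn; rewrite sumr_const card_ord => <-.
    apply: ler_wpM2r => //; apply: ler_sum => i _; by rewrite mul1r.
  - move=> i j; rewrite mxE; have := ind01 ((sg^-1)%g i < p)%N; have := ind01 ((sg^-1)%g j < q)%N; nra.
rewrite hobj hS.
rewrite (eq_bigr (fun i => (w i 0 * ind ((sg^-1)%g i < p)%N) * \sum_j w j 0 * ind ((sg^-1)%g j < q)%N)); last first.
  move=> i _; rewrite -mulrA; congr (_ * _); rewrite mulr_sumr; apply: eq_bigr => j _.
  rewrite mxE; ring.
rewrite -mulr_suml.
have hw' : forall i, w i 0 = wdesc w ((sg^-1)%g i) by move=> i; rewrite hd permKV.
under eq_bigr do rewrite hw'.
under [X in _ * X]eq_bigr do rewrite hw'.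
by rewrite (hsumi p (fun l => wdesc w l) hpn) (hsumi q (fun l => wdesc w l) hqn).
Qed.
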